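(* Let $\lambda_*>a_1,\dots,a_n$ be real, and let $(X_0,P_0)\in T^*V_{n,r}$ be real with $P_0$ belonging to the set $$\Big\{A^{1/2}(\lambda_* )\tilde X-\tfrac12X\big(\tilde X^TA^{1/2}(\lambda_* )X+X^TA^{1/2}(\lambda_* )\tilde X\big)\ :\ X^TX=\tilde X^T\tilde X=\mathbf I_r\Big\},$$ where $X=X_0$. Let $L(\lambda_* )$ be evaluated at $(X_0,P_0)$ and choose the branch of the discrete Neumann correspondence $\mathfrak B_r$ corresponding to a partition $\{w_1,\dots,w_r\mid-w_1,\dots,-w_r\}$ of its eigenvalues such that $w_1,\dots,w_r$ are pairwise distinct, $w_i+w_j\ne0$ and $w_i+\bar w_j\ne0$ for all $i,j=1,\dots,r$. Then the trajectory obtained from $(X_0,P_0)$ by iterating this branch is real.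
   Context: $A=\mathrm{diag}(a_1,\dots,a_n)$ real with distinct $a_i$, $A(\lambda)=\lambda\mathbf I_n-A$, $A^{1/2}(\lambda_* )=\mathrm{diag}(\sqrt{\lambda_*-a_i})$ with positive square roots. $T^*V_{n,r}=\{(X,P): X^TX=\mathbf I_r,\ X^TP+P^TX=0\}$. $L(\lambda)=\begin{pmatrix} X^TA(\lambda)^{-1}P & X^TA(\lambda)^{-1}X\\ \mathbf I_r-P^TA(\lambda)^{-1}P & -P^TA(\lambda)^{-1}X\end{pmatrix}$. For a partition $\{w_1,\dots,w_r\mid-w_1,\dots,-w_r\}$ of the eigenvalues of $L(\lambda_* )$ with the $w_i$ distinct and $w_i\ne-w_j$, let $\begin{pmatrix}\Xi\\ \Upsilon\end{pmatrix}$ be the matrix of eigenvectors with eigenvalues $w_1,\dots,w_r$ and $\Gamma=\Upsilon\Xi^{-1}$; the corresponding branch of $\mathfrak B_r$ is $\tilde X=A^{-1/2}(\lambda_* )(P+X\Gamma)$, $\tilde P=-A^{1/2}(\lambda_* )X+\tilde X\Gamma$, and iteration applies the same rule to the current point (the spectrum of $L(\lambda_* )$ being preserved). *)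

(* Defs.v *)
(* Complex numbers are modelled by an arbitrary
   numClosedFieldType C (e.g. the complex numbers); "real" means
   x \is Num.real. *)
From HB Require Import structures.
From mathcomp Require Import all_boot all_order all_algebra.
Set Implicit Arguments. Unset Strict Implicit. Unset Printing Implicit Defensive.
Import Order.TTheory GRing.Theory Num.Theory.
Local Open Scope ring_scope.

Section Neumann.
Variables (C : numClosedFieldType) (n r : nat).

Definition is_real_mx (m k : nat) (M : 'M[C]_(m, k)) : Prop :=
  forall i j, M i j \is Num.real.

Definition Ainv (a : 'I_n -> C) (lam : C) : 'M[C]_n :=
  diag_mx (\row_i (lam - a i)^-1).

Definition Ahalf (a : 'I_n -> C) (lam : C) : 'M[C]_n :=
  diag_mx (\row_i sqrtC (lam - a i)).

Definition Aneghalf (a : 'I_n -> C) (lam : C) : 'M[C]_n :=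
  diag_mx (\row_i (sqrtC (lam - a i))^-1).

Definition Lmat (a : 'I_n -> C) (lam : C) (X P : 'M[C]_(n, r)) : 'M[C]_(r + r) :=
  block_mx (X^T *m Ainv a lam *m P) (X^T *m Ainv a lam *m X)
           (1%:M - P^T *m Ainv a lam *m P) (- (P^T *m Ainv a lam *m X)).

(* One step of the branch of B_r determined by the eigenvalues w_1..w_r:
   V = (Xi ; Upsilon) has as j-th column an eigenvector of L(lam) for w_j,
   Gamma = Upsilon Xi^{-1}. *)
Definition neumann_step (a : 'I_n -> C) (lam : C) (w : 'I_r -> C)
    (X P X' P' : 'M[C]_(n, r)) : Prop :=
  exists V : 'M[C]_(r + r, r),
    [/\ Lmat a lam X P *m V = V *m diag_mx (\row_i w i),
        (forall j, col j V != 0),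
        usubmx V \in unitmx &
        let G := dsubmx V *m invmx (usubmx V) in
        X' = Aneghalf a lam *m (P + X *m G) /\
        P' = - (Ahalf a lam *m X) + X' *m G].

End Neumann.

(* Main.v *)
Require Import Defs.
From HB Require Import structures.
From mathcomp Require Import all_boot all_order all_algebra.
Import Order.TTheory GRing.Theory Num.Theory Num.Def.
Set Implicit Arguments. Unset Strict Implicit.
Local Open Scope ring_scope.

Section Aux.
Variable C : numClosedFieldType.

Definition rmx m k (M : 'M[C]_(m, k)) := map_mx conjC M = M.

Lemma rmxP m k (M : 'M[C]_(m, k)) : is_real_mx M <-> rmx M.
Proof.
split=> [h|h i j]; first by apply/matrixP=> i j; rewrite mxE; apply/CrealP.
by apply/CrealP; have := congr1 (fun M : 'M[C]_(m, k) => M i j) h; rewrite mxE.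
Qed.

Definition Jm r : 'M[C]_(r + r) := block_mx 0 1%:M (-1%:M) 0.

Lemma JmT r : (Jm r)^T = - Jm r.
Proof.
rewrite /Jm tr_block_mx !trmx0 (raddfN (@trmx C _ _)) /= !trmx1.
by rewrite opp_block_mx oppr0 opprK.
Qed.

Lemma lagr r (L : 'M[C]_(r + r)) (V U : 'M_(r + r, r)) (d e : 'I_r -> C) :
  (Jm r *m L)^T = Jm r *m L ->
  L *m V = V *m diag_mx (\row_i d i) -> L *m U = U *m diag_mx (\row_i e i) ->
  (forall i j, d i + e j != 0) -> V^T *m Jm r *m U = 0.
Proof.
move=> S hV hU hde.
have h1 : V^T *m (Jm r *m L) *m U = V^T *m Jm r *m U *m diag_mx (\row_i e i).
  by rewrite !mulmxA -[V^T *m Jm r *m L *m U]mulmxA hU !mulmxA.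
have h2 : V^T *m (Jm r *m L) *m U = - (diag_mx (\row_i d i) *m (V^T *m Jm r *m U)).
  rewrite -{1}S trmx_mul JmT [V^T *m (L^T *m _)]mulmxA -trmx_mul hV trmx_mul tr_diag_mx.
  by rewrite mulmxN mulNmx !mulmxA.
have h3 := etrans (esym h1) h2.
move: h3; set K := V^T *m Jm r *m U => h3; clearbody K.
apply/matrixP=> i j; have := congr1 (fun M : 'M[C]_r => M i j) h3.
rewrite mul_mx_diag mxE mxE mul_diag_mx !mxE => h.
have : (d i + e j) * K i j = 0.
  by rewrite mulrDl [e j * _]mulrC h addrN.
by move/eqP; rewrite mulf_eq0 (negbTE (hde i j)) /= => /eqP.
Qed.


Section Cl.
Variables (m k p : nat).
Lemma rmxM (A : 'M[C]_(m, k)) (B : 'M[C]_(k, p)) : rmx A -> rmx B -> rmx (A *m B).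
Proof. by rewrite /rmx map_mxM => -> ->. Qed.
Lemma rmxD (A B : 'M[C]_(m, k)) : rmx A -> rmx B -> rmx (A + B).
Proof. by rewrite /rmx map_mxD => -> ->. Qed.
Lemma rmxN (A : 'M[C]_(m, k)) : rmx A -> rmx (- A).
Proof. by rewrite /rmx map_mxN => ->. Qed.
Lemma rmxT (A : 'M[C]_(m, k)) : rmx A -> rmx A^T.
Proof. by rewrite /rmx => h; rewrite -map_trmx h. Qed.
Lemma rmx1 : rmx (1%:M : 'M[C]_m).
Proof. by rewrite /rmx map_mx1. Qed.
Lemma rmxdiag (f : 'I_m -> C) : (forall i, f i \is Num.real) -> rmx (diag_mx (\row_i f i)).
Proof.
move=> hf; rewrite /rmx map_diag_mx; congr diag_mx; apply/matrixP=> i j.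
by rewrite !mxE; apply: conj_Creal.
Qed.
End Cl.

Lemma rmxblock m1 m2 n1 n2 (A : 'M[C]_(m1, n1)) (B : 'M[C]_(m1, n2))
  (D : 'M[C]_(m2, n1)) (E : 'M[C]_(m2, n2)) :
  rmx A -> rmx B -> rmx D -> rmx E -> rmx (block_mx A B D E).
Proof. by rewrite /rmx map_block_mx => -> -> -> ->. Qed.


Lemma JL_sym n r (a : 'I_n -> C) lam (X P : 'M[C]_(n, r)) :
  (Jm r *m Lmat a lam X P)^T = Jm r *m Lmat a lam X P.
Proof.
have AT : (Ainv a lam)^T = Ainv a lam by rewrite /Ainv tr_diag_mx.
rewrite /Jm /Lmat mulmx_block !mul0mx !mul1mx !mulNmx !mul1mx !add0r !addr0.
rewrite tr_block_mx; congr block_mx.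
- by rewrite (raddfB (@trmx C _ _)) /= trmx1 !trmx_mul AT trmxK mulmxA.
- by rewrite (raddfN (@trmx C _ _)) /= !trmx_mul AT trmxK mulmxA.
- by rewrite (raddfN (@trmx C _ _)) /= !trmx_mul AT trmxK mulmxA.
- by rewrite (raddfN (@trmx C _ _)) /= !trmx_mul AT trmxK mulmxA.
Qed.

Lemma VJU r (V U : 'M[C]_(r + r, r)) :
  V^T *m Jm r *m U = (usubmx V)^T *m dsubmx U - (dsubmx V)^T *m usubmx U.
Proof.
rewrite -{1}(vsubmxK V) -{1}(vsubmxK U) tr_col_mx /Jm mul_row_block.
rewrite !mulmx0 !addr0 !add0r mulmx1 mulmxN mulmx1 mul_row_col mulNmx.
by rewrite addrC.
Qed.

End Aux.

Theorem proposition6p5 (C : numClosedFieldType) (n r : nat)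
  (a : 'I_n -> C) (lam : C) (X0 P0 : 'M[C]_(n, r)) (w : 'I_r -> C)
  (Xs Ps : nat -> 'M[C]_(n, r)) :
  injective a ->
  (forall i, a i \is Num.real) -> lam \is Num.real ->
  (forall i, a i < lam) ->
  is_real_mx X0 -> is_real_mx P0 ->
  X0^T *m X0 = 1%:M -> X0^T *m P0 + P0^T *m X0 = 0 ->
  (exists Xt : 'M[C]_(n, r),
      [/\ is_real_mx Xt, Xt^T *m Xt = 1%:M &
          P0 = Ahalf a lam *m Xt
               - 2^-1 *: (X0 *m (Xt^T *m Ahalf a lam *m X0
                                 + X0^T *m Ahalf a lam *m Xt))]) ->
  char_poly (Lmat a lam X0 P0)
    = \prod_(i < r) (('X - (w i)%:P) * ('X + (w i)%:P)) ->
  injective w ->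
  (forall i j, w i + w j != 0) ->
  (forall i j, w i + (w j)^* != 0) ->
  Xs 0%N = X0 -> Ps 0%N = P0 ->
  (forall k, neumann_step a lam w (Xs k) (Ps k) (Xs k.+1) (Ps k.+1)) ->
  forall k, is_real_mx (Xs k) /\ is_real_mx (Ps k).
Proof.
move=> _ areal lreal alt hX0 hP0 _ _ _ _ _ hw hwc hX hP hstep.
have sq i : sqrtC (lam - a i) \is Num.real.
  by apply: sqrtC_real; rewrite subr_ge0 ltW.
have rA : rmx (Ainv a lam).
  by apply: rmxdiag => i; rewrite realV; apply: rpredB.
have rAh : rmx (Ahalf a lam) by apply: rmxdiag.
have rAn : rmx (Aneghalf a lam) by apply: rmxdiag => i; rewrite realV.
elim=> [|k [IHX IHP]]; first by rewrite hX hP.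
have [V [hLV _ uXi /= [hX' hP']]] := hstep k.
move/rmxP: IHX => IHX; move/rmxP: IHP => IHP.
move: hLV; set L := Lmat a lam (Xs k) (Ps k) => hLV.
have rL : rmx L.
  apply: rmxblock; repeat (apply: rmxM || apply: rmxD || apply: rmxN
     || apply: rmxT || apply: rmx1 || assumption).
have hLVb : L *m map_mx conjC V = map_mx conjC V *m diag_mx (\row_i (w i)^*).
  rewrite -{1}rL -map_mxM hLV map_mxM map_diag_mx; congr (_ *m diag_mx _).
  by apply/matrixP=> i j; rewrite !mxE.
have K0 := lagr (JL_sym a lam (Xs k) (Ps k)) hLV hLV hw.
have K1 := lagr (JL_sym a lam (Xs k) (Ps k)) hLV hLVb hwc.
rewrite !VJU -map_usubmx -map_dsubmx in K0 K1.
move: uXi K0 K1 hX' hP'.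
set Xi := usubmx V; set Y := dsubmx V => uXi K0 K1 hX' hP'.
move/eqP: K0; rewrite subr_eq0 => /eqP K0.
move/eqP: K1; rewrite subr_eq0 => /eqP K1.
have uXT : Xi^T \in unitmx by rewrite unitmx_tr.
have uXb : map_mx conjC Xi \in unitmx by rewrite map_unitmx.
have e1 : Y *m invmx Xi = invmx Xi^T *m Y^T.
  by rewrite -[Y in LHS](mulKmx uXT) K0 -mulmxA (mulmxK uXi).
have e2 : map_mx conjC Y *m invmx (map_mx conjC Xi) = invmx Xi^T *m Y^T.
  by rewrite -[map_mx conjC Y in LHS](mulKmx uXT) K1 -mulmxA (mulmxK uXb).
have rG : rmx (Y *m invmx Xi) by rewrite /rmx map_mxM map_invmx e2 e1.
have rX' : rmx (Xs k.+1).
  by rewrite hX'; apply: rmxM => //; apply: rmxD => //; apply: rmxM.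
split; apply/rmxP => //.
by rewrite hP'; apply: rmxD; [apply: rmxN; apply: rmxM | apply: rmxM].
Qed.
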